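(* Let $Q(X,Y)=\sum_{i=0}^{t} Q_i(X)Y^i \in M_{s,\ell}$ have $Y$-degree exactly $t$, where $t < s$. Then $G(X)^{s-t}$ divides $Q_t(X)$.
   Context: Let $\mathbb F_q$ be a finite field and $n<q$. Let $\alpha_0,\dots,\alpha_{n-1}$ be distinct nonzero elements of $\mathbb F_q$ and $w_0,\dots,w_{n-1}$ nonzero elements of $\mathbb F_q$. Let $r=(r_0,\dots,r_{n-1})\in\mathbb F_q^n$ and $r_i'=r_i/w_i$. Let $G(X)=\prod_{i=0}^{n-1}(X-\alpha_i)$. Let $s\le \ell$ be positive integers. A polynomial $Q\in\mathbb F_q[X,Y]$ passes through a point $(a,b)\in\mathbb F_q^2$ with multiplicity $s$ if $Q(X+a,Y+b)$ has no monomials of total degree less than $s$. $M_{s,\ell}$ denotes the set of all $Q\in\mathbb F_q[X,Y]$ of $Y$-degree at most $\ell$ that pass through each of the $n$ points $(\alpha_i,r_i')$ with multiplicity $s$. *)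

(* Defs.v *)
From HB Require Import structures.
From mathcomp Require Import all_boot all_order all_algebra all_field.
Set Implicit Arguments. Unset Strict Implicit. Unset Printing Implicit Defensive.
Import GRing.Theory.
Local Open Scope ring_scope.

(* Bivariate polynomials F[X,Y] are represented as {poly {poly F}}:
   the outer variable is Y, coefficients are polynomials in X.
   So Q = \sum_i Q`_i Y^i with Q`_i : {poly F} = Q_i(X). *)

Definition shift2 (F : fieldType) (a b : F) (Q : {poly {poly F}}) : {poly {poly F}} :=
  (map_poly (fun p : {poly F} => p \Po ('X + a%:P)) Q) \Po ('X + (b%:P)%:P).

Definition coef2 (F : fieldType) (P : {poly {poly F}}) (i j : nat) : F := (P`_j)`_i.

Definition passes_with_mult (F : fieldType) (Q : {poly {poly F}}) (a b : F) (s : nat) : Prop :=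
  forall i j : nat, (i + j < s)%N -> coef2 (shift2 a b Q) i j = 0.

Definition in_M (F : fieldType) (n s l : nat) (alpha r' : 'I_n -> F)
    (Q : {poly {poly F}}) : Prop :=
  (size Q <= l.+1)%N /\ forall i : 'I_n, passes_with_mult Q (alpha i) (r' i) s.

(* Main.v *)
Require Import Defs.
From HB Require Import structures.
From mathcomp Require Import all_boot all_order all_algebra all_field.
From mathcomp Require Import zify.
Import GRing.Theory.
Local Open Scope ring_scope.

Lemma dvd_loc (F : fieldType) (p : {poly F}) (a : F) (k : nat) :
  (forall i, (i < k)%N -> (p \Po ('X + a%:P))`_i = 0) ->
  ('X - a%:P) ^+ k %| p.
Proof.
move=> H; set q := p \Po ('X + a%:P).
have tq : take_poly k q = 0.
  by apply/polyP => i; rewrite coef_take_poly coef0; case: ifP => // /H.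
have eq : q = drop_poly k q * 'X^k by rewrite -{1}(poly_take_drop k q) tq add0r.
have -> : p = q \Po ('X - a%:P).
  rewrite /q -comp_polyA comp_polyD comp_polyX comp_polyC subrK.
  by rewrite comp_polyXr.
by rewrite eq comp_polyM comp_Xn_poly dvdp_mull.
Qed.

Lemma prod_dvd (F : fieldType) (s : seq F) (k : nat) (p : {poly F}) :
  uniq s -> (forall a, a \in s -> ('X - a%:P) ^+ k %| p) ->
  \prod_(a <- s) ('X - a%:P) ^+ k %| p.
Proof.
elim: s => [|a s IH] /=; first by rewrite big_nil dvd1p.
move=> /andP[nas us] H; rewrite big_cons Gauss_dvdp.
  rewrite H ?mem_head //= IH // => b bs; apply: H; rewrite in_cons bs orbT. by [].
rewrite prodrXl; apply: coprimep_expl; apply: coprimep_expr.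
by rewrite coprimep_sym coprimep_XsubC root_prod_XsubC.
Qed.

Lemma top_shift (F : fieldType) (Q : {poly {poly F}}) t a b :
  size Q = t.+1 -> (shift2 a b Q)`_t = Q`_t \Po ('X + a%:P).
Proof.
move=> sQ; rewrite /shift2.
set f := (fun p : {poly F} => p \Po ('X + a%:P)).
set P := map_poly f Q.
have f0 : f 0 = 0 by rewrite /f comp_poly0.
have Pt : P`_t = Q`_t \Po ('X + a%:P) by rewrite /P coef_map_id0.
have Qt : Q`_t != 0.
  have : lead_coef Q != 0 by rewrite lead_coef_eq0 -size_poly_eq0 sQ.
  by rewrite lead_coefE sQ.
have nz : Q`_t \Po ('X + a%:P) != 0 by rewrite comp_poly2_eq0 ?size_XaddC.
have sP : size P = t.+1.
  rewrite /P size_map_poly_id0 // lead_coefE sQ /=; exact: nz.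
have s2 : size (P \Po ('X + (b%:P)%:P)) = t.+1 by rewrite size_comp_poly2 ?size_XaddC.
have := lead_coef_comp P (q := 'X + (b%:P)%:P).
rewrite size_XaddC lead_coefXaddC expr1n mulr1 => /(_ isT).
by rewrite lead_coefE s2 lead_coefE sP /= Pt.
Qed.

Theorem lemma1 (F : finFieldType) (n : nat) (hnq : (n < #|F|)%N)
  (alpha w r : 'I_n -> F)
  (alpha_inj : injective alpha) (alpha_nz : forall i, alpha i != 0)
  (w_nz : forall i, w i != 0)
  (s l : nat) (s_pos : (0 < s)%N) (s_le_l : (s <= l)%N)
  (Q : {poly {poly F}}) (t : nat)
  (hQ : in_M s l alpha (fun i => r i / w i) Q)
  (hdeg : size Q = t.+1) (hts : (t < s)%N) :
  (\prod_(i < n) ('X - (alpha i)%:P)) ^+ (s - t) %| Q`_t.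
Proof.
case: hQ => _ hM.
rewrite -prodrXl.
have := @prod_dvd F (map alpha (index_enum 'I_n)) (s - t) Q`_t.
rewrite big_map; apply.
  by rewrite map_inj_uniq // index_enum_uniq.
move=> a /mapP[i _ ->]; apply: dvd_loc => j hj.
have := hM i j t; rewrite /coef2 top_shift //; apply.
by move: hj hts; clear; lia.
Qed.
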